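(* For every $I\in\mathcal I$, there is exactly one $\vartriangleleft$-minimal set in $\mathcal M(I)$.
   Context: Let $(a_i)_{i=1,\dots,n}$ be a sequence of distinct integers between $1$ and $n$, and set $a_0=0$; write $A=(a_i)_{i=0,1,\dots,n}$. A set $I\subseteq\{0\}\cup[n]$ is feasible if $a_i<a_j$ for all $i,j\in I$ with $i<j$; $\mathcal I$ denotes the family of feasible sets of maximum cardinality. Patience sorting: start with empty piles $P_0,\dots,P_n$; for $i=0,1,\dots,n$ in order, put $a_i$ on top of the pile $P_j$ with smallest index $j$ such that $P_j$ is empty or the top element of $P_j$ is greater than $a_i$. Let $P_0,\dots,P_k$ be the resulting nonempty piles. Say $a_u$ is placed below $a_v$ on a pile if both lie on the same pile and $a_u$ was put there before $a_v$. For $I,J\in\mathcal I$, write $I\vartriangleleft J$ if $I\setminus J=\{u\}$ and $J\setminus I=\{v\}$ for some $u,v$ such that $a_u$ is placed strictly below $a_v$ on pile $P_i$ for some $1\le i\le k$. For $I\in\mathcal I$, $\mathcal M(I)\subseteq\mathcal I$ is the smallest family containing $I$ such that whenever $J\in\mathcal M(I)$ and $J'\vartriangleleft J$ then $J'\in\mathcal M(I)$ (the lower set of $I$ in the reflexive–transitive closure of $\vartriangleleft$). A set $I\in\mathcal I$ is $\vartriangleleft$-minimal if there is no $J\in\mathcal I$ with $J\vartriangleleft I$. *)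

(* Defs.v *)
From mathcomp Require Import all_boot.
Set Implicit Arguments. Unset Strict Implicit. Unset Printing Implicit Defensive.

(* The sequence A = (a_0, a_1, ..., a_n) is given by a function a : nat -> nat;
   only the values a 0, ..., a n matter. Indices 0..n are 'I_n.+1. *)

Definition feasible (n : nat) (a : nat -> nat) (I : {set 'I_n.+1}) : Prop :=
  forall i j : 'I_n.+1, i \in I -> j \in I -> (i < j)%N -> a i < a j.

(* I belongs to the family \mathcal I of feasible sets of maximum cardinality. *)
Definition maxfeas (n : nat) (a : nat -> nat) (I : {set 'I_n.+1}) : Prop :=
  feasible a I /\ forall J : {set 'I_n.+1}, feasible a J -> #|J| <= #|I|.

(* Patience sorting.  The state is the sequence of top elements of the
   nonempty piles P_0, P_1, ... (in order).  A value x is put on the pile with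
   smallest index j whose top is greater than x, or on the first empty pile
   (index = number of nonempty piles) if there is none. *)
Definition ps_step (tops : seq nat) (x : nat) : seq nat :=
  set_nth 0 tops (find (fun t => x < t) tops) x.

Definition tops_before (a : nat -> nat) (i : nat) : seq nat :=
  foldl ps_step [::] (map a (iota 0 i)).

Definition pile (a : nat -> nat) (i : nat) : nat :=
  find (fun t => a i < t) (tops_before a i).

(* a_u is placed strictly below a_v on pile P_i for some i >= 1:
   same pile, index >= 1, and a_u put there earlier (u < v). *)
Definition placed_below (a : nat -> nat) (u v : nat) : Prop :=
  pile a u = pile a v /\ 1 <= pile a u /\ u < v.

Definition tri (n : nat) (a : nat -> nat) (I J : {set 'I_n.+1}) : Prop :=
  maxfeas a I /\ maxfeas a J /\
  exists u v : 'I_n.+1,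
    I :\: J = [set u] /\ J :\: I = [set v] /\ placed_below a u v.

(* M I J : J \in \mathcal M(I), the lower set of I for the reflexive-transitive
   closure of <| (the smallest family containing I closed under predecessors). *)
Inductive M (n : nat) (a : nat -> nat) (I : {set 'I_n.+1}) : {set 'I_n.+1} -> Prop :=
| M_refl : M a I I
| M_step : forall J J', M a I J -> tri a J' J -> M a I J'.

Definition tri_minimal (n : nat) (a : nat -> nat) (I : {set 'I_n.+1}) : Prop :=
  maxfeas a I /\ ~ (exists J : {set 'I_n.+1}, tri a J I).

(* Main.v *)
Require Import Defs.
From mathcomp Require Import all_boot zify.
From Stdlib Require Import Classical.

Lemma tops_S a j : tops_before a j.+1 = ps_step (tops_before a j) (a j).
Proof. by rewrite /tops_before -addn1 iotaD map_cat foldl_cat add0n. Qed.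

Definition Inv a j :=
  let s := tops_before a j in
  (forall q r, q <= r -> r < size s -> nth 0 s q <= nth 0 s r) /\
  (forall i, i < j -> pile a i < size s /\ nth 0 s (pile a i) <= a i).

Lemma inv_all a j : Inv a j.
Proof.
elim: j => [|j [IHs IHp]]; first by split => // q r; rewrite /tops_before /=; lia.
rewrite /Inv tops_S /ps_step.
set s := tops_before a j in IHs IHp *; set x := a j in IHp * .
have pj : pile a j = find (fun t => x < t) s by [].
set f := find _ _ in pj *.
have fs : f <= size s by apply: find_size.
have fx : f < size s -> x < nth 0 s f.
  by move=> H; apply: (@nth_find _ 0 (fun t => x < t)); rewrite has_find.
have bf : forall q, q < f -> nth 0 s q <= x.
  move=> q Hq; have := (@before_find _ 0 (fun t => x < t) s q Hq) => /= H.
  by move/negbT: H; rewrite -leqNgt.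
split.
  move=> q r qr; rewrite size_set_nth !nth_set_nth /= => rs.
  case: (q =P f) => [E|qf]; case: (r =P f) => [E'|rf] //.
  - have rs' : r < size s by lia.
    have := fx ltac:(lia); have := IHs f r ltac:(lia) rs'; lia.
  - apply: bf; lia.
  - apply: IHs => //; lia.
move=> i; rewrite ltnS leq_eqVlt => /orP [/eqP ->|ij].
  by rewrite pj size_set_nth nth_set_nth /= eqxx; lia.
have [Hi1 Hi2] := IHp i ij.
rewrite size_set_nth nth_set_nth /=; split; first lia.
case: (eqVneq (pile a i) f) => [E|//].
have := fx ltac:(lia); rewrite -E; lia.
Qed.

Lemma P1 a i j : i < j -> a i < a j -> pile a i < pile a j.
Proof.
move=> ij aij; have [Hs Hp] := inv_all a j.
have [Hi1 Hi2] := Hp i ij.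
rewrite ltnNge; apply/negP => ji.
set s := tops_before a j in Hs Hi1 Hi2.
have pj : pile a j = find (fun t => a j < t) s by [].
have hs : has (fun t => a j < t) s by rewrite has_find -pj; lia.
have := @nth_find _ 0 _ _ hs; rewrite -pj /=.
have := Hs _ _ ji Hi1; lia.
Qed.

Ltac bfacts := repeat match goal with
 | H : is_true (?p != ?q) |- _ =>
     let h1 := fresh "bf" in let h2 := fresh "bf" in
     have h1 := negbTE H; rewrite eq_sym in H; have h2 := negbTE H; clear H
 | H : is_true (~~ (?p \in ?A)) |- _ =>
     let h1 := fresh "bf" in have h1 := negbTE H; clear H
 end.
Ltac brew := repeat match goal with
 | H : ?b = false |- context[?b] => lazymatch b with false => fail | _ => rewrite H end
 | H : is_true ?b |- context[?b] => lazymatch b with true => fail | _ => rewrite H end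
 end; rewrite ?eqxx /=.
Ltac solve_set := let x := fresh "x" in apply/setP => x; rewrite !inE;
  repeat match goal with |- context [@eq_op _ x ?y] => case: (x =P y) => [?|?]; [subst x|] end;
  bfacts; brew; try done; try by case: (x \in _).

Section Main.
Variable n : nat.
Variable a : nat -> nat.
Hypothesis a0 : a 0 = 0.
Hypothesis a_range : forall i, 1 <= i <= n -> 1 <= a i <= n.
Hypothesis a_inj : forall i j, 1 <= i <= n -> 1 <= j <= n -> a i = a j -> i = j.

Lemma adist i j : i < j -> j <= n -> a i != a j.
Proof.
move=> ij jn; case: i ij => [|i] ij.
  by rewrite a0; have := a_range j; lia.
apply/eqP => E; have := a_inj i.+1 j; lia.
Qed.

Lemma P2o (i j : 'I_n.+1) : i < j -> pile a i = pile a j -> a j < a i.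
Proof.
move=> ij pe; have := P1 a _ _ ij; have := adist _ _ ij (ltn_ord j); rewrite pe; lia.
Qed.

Lemma same_pile J (FJ : feasible a J) (x y : 'I_n.+1) :
  x \in J -> y \in J -> pile a x = pile a y -> x = y.
Proof.
move=> xJ yJ pe; case: (ltngtP x y) => [xy|yx|/val_inj //].
  by have := P1 a _ _ xy (FJ _ _ xJ yJ xy); rewrite pe ltnn.
by have := P1 a _ _ yx (FJ _ _ yJ xJ yx); rewrite pe ltnn.
Qed.

Lemma tri_dec J1 J : tri a J1 J -> exists u v : 'I_n.+1,
  [/\ J1 = u |: (J :\ v), u \notin J, v \in J, placed_below a u v
    & maxfeas a J1 /\ maxfeas a J].
Proof.
case=> M1 [M2 [u [v [E1 [E2 pb]]]]].
have e1 : J1 :\: J =i [set u] by rewrite E1.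
have e2 : J :\: J1 =i [set v] by rewrite E2.
have := e1 u; have := e2 v; rewrite !inE !eqxx.
move=> /andP [vJ1 vJ] /andP [uJ uJ1].
exists u, v; split => //.
apply/setP => x; have := e1 x; have := e2 x; rewrite !inE.
by case: (x \in J1) (x \in J) => [] [] /= <- <-.
Qed.

Definition meas (J : {set 'I_n.+1}) := \sum_(i in J) (i : nat).

Lemma tri_meas J1 J : tri a J1 J -> meas J1 < meas J.
Proof.
case/tri_dec => u [v [-> uJ vJ [_ [_ uv]] _]].
rewrite /meas big_setU1 /=; last by rewrite !inE negb_and uJ orbT.
by rewrite (big_setD1 _ vJ) /= ltn_add2r.
Qed.

Lemma tri_of (K J : {set 'I_n.+1}) u v : maxfeas a K -> maxfeas a J ->
  u \notin J -> v \in J -> K = u |: (J :\ v) -> placed_below a u v -> tri a K J.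
Proof.
move=> MK MJ uJ vJ EK pb; split => //; split => //; exists u, v.
have uv : u != v by apply: contraNneq uJ => ->.
by subst K; split; [solve_set|split; [solve_set|done]].
Qed.

Lemma pair_lt (J J1 J2 : {set 'I_n.+1}) (u1 v1 u2 v2 : 'I_n.+1) :
  feasible a J -> feasible a J1 -> feasible a J2 ->
  v1 \in J -> v2 \in J -> u1 \in J1 -> v2 \in J1 -> u2 \in J2 -> v1 \in J2 ->
  u1 != v2 -> u2 != v1 -> v1 != v2 ->
  pile a u1 = pile a v1 -> pile a u2 = pile a v2 -> u1 < v1 -> u2 < v2 ->
  u1 < u2 -> a u1 < a u2.
Proof.
move=> FJ FJ1 FJ2 v1J v2J u1J1 v2J1 u2J2 v1J2 n12 n21 nv p1 p2 l1 l2 l12.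
have pd : pile a v1 <> pile a v2 by move=> /(same_pile _ FJ _ _ v1J v2J) E; rewrite E eqxx in nv.
case: (ltngtP (pile a v1) (pile a v2)) => [lt|gt|//].
- have h1 : u1 < v2.
    case: (ltngtP u1 v2) => [//|gt|/val_inj E]; last by rewrite E eqxx in n12.
    have := P1 a _ _ gt (FJ1 _ _ v2J1 u1J1 gt); lia.
  have h2 : v1 < u2.
    case: (ltngtP v1 u2) => [//|gt|/val_inj E]; last by rewrite E eqxx in n21.
    have := P1 a _ _ gt (FJ2 _ _ u2J2 v1J2 gt); lia.
  have := FJ1 _ _ u1J1 v2J1 h1; have := P2o _ _ l2 p2; lia.
- have h1 : v2 < u1.
    case: (ltngtP u1 v2) => [lt|//|/val_inj E]; last by rewrite E eqxx in n12.
    have := P1 a _ _ lt (FJ1 _ _ u1J1 v2J1 lt); lia.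
  lia.
Qed.

Lemma lconf (J1 J2 J : {set 'I_n.+1}) : tri a J1 J -> tri a J2 J ->
  exists L, M a J1 L /\ M a J2 L.
Proof.
case/tri_dec => u1 [v1 [E1 u1J v1J [pb1 [pp1 l1]] [MF1 MF]]].
case/tri_dec => u2 [v2 [E2 u2J v2J [pb2 [pp2 l2]] [MF2 _]]].
have n11 : u1 != v1 by apply: contraNneq u1J => ->.
have n22 : u2 != v2 by apply: contraNneq u2J => ->.
have n12 : u1 != v2 by apply: contraNneq u1J => ->.
have n21 : u2 != v1 by apply: contraNneq u2J => ->.
case: (eqVneq v1 v2) => [ev|nv].
  subst v2; case: (eqVneq u1 u2) => [eu|nu].
    by subst u2; exists J1; split; rewrite ?E1 ?E2; constructor.
  case: (ltngtP u1 u2) => [lt|gt|/val_inj E]; last by rewrite E eqxx in nu.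
  - exists J1; split; first by constructor.
    apply: (M_step (J := J2)); first by constructor.
    apply: (tri_of _ _ u1 u2) => //.
    + by rewrite E2 !inE negb_or nu /= negb_and u1J orbT.
    + by rewrite E2 !inE eqxx.
    + by rewrite E1 E2; solve_set.
    + by split; [congruence | split; [congruence|]].
  - exists J2; split; last by constructor.
    apply: (M_step (J := J1)); first by constructor.
    apply: (tri_of _ _ u2 u1) => //.
    + by rewrite E1 !inE negb_or eq_sym nu /= negb_and u2J orbT.
    + by rewrite E1 !inE eqxx.
    + by rewrite E1 E2; solve_set.
    + by split; [congruence | split; [congruence|]].
have [[FJ1 _] [[FJ2 _] [FJ CJ]]] := (MF1, (MF2, MF)).
have pd : pile a v1 <> pile a v2 by move=> /(same_pile _ FJ _ _ v1J v2J) E; rewrite E eqxx in nv.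
have nu : u1 != u2 by apply/eqP => E; subst u2; apply: pd; congruence.
have v2J1 : v2 \in J1 by rewrite E1 !inE (eq_sym v2 v1) nv v2J orbT.
have v1J2 : v1 \in J2 by rewrite E2 !inE nv v1J orbT.
have u1J1 : u1 \in J1 by rewrite E1 !inE eqxx.
have u2J2 : u2 \in J2 by rewrite E2 !inE eqxx.
set K := u1 |: (u2 |: (J :\ v1 :\ v2)).
have memK z : z \in K -> [\/ z = u1, z = u2 | [/\ z \in J, z \in J1 & z \in J2]].
  rewrite !inE => /or3P [/eqP->|/eqP->|/and3P [zv2 zv1 zJ]]; [by constructor|by constructor|].
  by apply: Or33; rewrite E1 E2 !inE zv1 zv2 zJ !orbT.
have FK : feasible a K.
  move=> x y /memK [->|->|[xJ xJ1 xJ2]] /memK [->|->|[yJ yJ1 yJ2]] xy.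
  - by rewrite ltnn in xy.
  - exact: (pair_lt _ _ _ _ _ _ _ FJ FJ1 FJ2 v1J v2J u1J1 v2J1 u2J2 v1J2).
  - exact: FJ1.
  - apply: (pair_lt _ _ _ _ _ _ _ FJ FJ2 FJ1 v2J v1J u2J2 v1J2 u1J1 v2J1) => //; by rewrite eq_sym.
  - by rewrite ltnn in xy.
  - exact: FJ2.
  - exact: FJ1.
  - exact: FJ2.
  - exact: FJ.
have MK : maxfeas a K.
  split => // L FL; apply: (leq_trans (CJ L FL)).
  rewrite (cardsD1 v1 J) (cardsD1 v2 (J :\ v1)) !cardsU1 !inE.
  by rewrite v1J v2J (eq_sym v2 v1) nv (negbTE nu) (negbTE u1J) (negbTE u2J) !andbF.
exists K; split.
- apply: (M_step (J := J1)); first by constructor.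
  apply: (tri_of _ _ u2 v2) => //.
  + by rewrite E1 !inE negb_or eq_sym nu /= negb_and u2J orbT.
  + by rewrite /K E1; solve_set.
- apply: (M_step (J := J2)); first by constructor.
  apply: (tri_of _ _ u1 v1) => //.
  + by rewrite E2 !inE negb_or nu /= negb_and u1J orbT.
  + by rewrite /K E2; solve_set.
Qed.

Lemma M_first (I J : {set 'I_n.+1}) : M a I J -> I = J \/ exists I1, tri a I1 I /\ M a I1 J.
Proof.
elim => [|J0 J' HM IH t]; first by left.
right; case: IH => [E|[I1 [t1 M1]]].
  by subst J0; exists J'; split => //; constructor.
by exists I1; split => //; exact: M_step M1 t.
Qed.

Lemma M_trans (I J K : {set 'I_n.+1}) : M a I J -> M a J K -> M a I K.
Proof. by move=> H1; elim => // J0 J' _ IH t; exact: M_step IH t. Qed.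

Lemma M_maxfeas (I J : {set 'I_n.+1}) : maxfeas a I -> M a I J -> maxfeas a J.
Proof. by move=> HI; elim => // J0 J' _ _ [? _]. Qed.

Lemma nf_exists (J : {set 'I_n.+1}) : exists N, M a J N /\ ~ (exists K, tri a K N).
Proof.
move: {2}(meas J).+1 (ltnSn (meas J)) => m; elim: m J => [//|m IH] J HJ.
case: (classic (exists K, tri a K J)) => [[K t]|nK].
  have [N [MN NF]] := IH K (leq_trans (tri_meas _ _ t) HJ).
  exists N; split => //; apply: (M_trans _ _ _ _ MN); apply: M_step t; constructor.
by exists J; split => //; constructor.
Qed.

Lemma nf_unique (J N1 N2 : {set 'I_n.+1}) : M a J N1 -> M a J N2 ->
  ~ (exists K, tri a K N1) -> ~ (exists K, tri a K N2) -> N1 = N2.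
Proof.
move: {2}(meas J).+1 (ltnSn (meas J)) => m; elim: m J N1 N2 => [//|m IH] J N1 N2 HJ.
move=> /M_first [<-|[J1 [t1 M1]]] /M_first [<-|[J2 [t2 M2]]] NF1 NF2 //.
- by case: NF1; exists J2.
- by case: NF2; exists J1.
have [L [L1 L2]] := lconf _ _ _ t1 t2.
have [N [MN NF]] := nf_exists L.
have -> := IH J1 N1 N (leq_trans (tri_meas _ _ t1) HJ) M1 (M_trans _ _ _ L1 MN) NF1 NF.
by have -> := IH J2 N2 N (leq_trans (tri_meas _ _ t2) HJ) M2 (M_trans _ _ _ L2 MN) NF2 NF.
Qed.

End Main.

Theorem lemma2 (n : nat) (a : nat -> nat)
  (a0 : a 0 = 0)
  (a_range : forall i, 1 <= i <= n -> 1 <= a i <= n)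
  (a_inj : forall i j, 1 <= i <= n -> 1 <= j <= n -> a i = a j -> i = j)
  (I : {set 'I_n.+1}) (HI : maxfeas a I) :
  exists! J : {set 'I_n.+1}, M a I J /\ tri_minimal a J.
Proof.
have [N [MN NF]] := nf_exists n a I.
exists N; split; first by split => //; split => //; exact: (M_maxfeas _ _ _ _ HI MN).
move=> N' [MN' [_ NF']].
exact: (@nf_unique n a a0 a_range a_inj _ _ _ MN MN' NF NF').
Qed.
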